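(* Let $d\geq 1$. For every $d$-dimensional cube tiling $\mathcal{T}$ one has $m_2(\mathcal{T})\le m_2(\mathcal{R})$, where $\mathcal{R}$ is the regular cube tiling $\{z+[0,2[^d : z\in 2\mathbb{Z}^d\}$; i.e. the regular cube tiling has the highest second moment among cube tilings.
   Context: A $d$-dimensional cube tiling is a $4\mathbb{Z}^d$-invariant tiling of $\mathbb{R}^d$ by translates $y+[0,2[^d$ with $y\in\mathbb{Z}^d$. For $z\in\mathbb{Z}^d$, $N_z(\mathcal{T})$ is the number of cubes of $\mathcal{T}$ contained in $z+[0,4[^d$, and the second moment is $m_2(\mathcal{T})=4^{-d}\sum_{z\in\{0,1,2,3\}^d}N_z(\mathcal{T})^2$. *)

(* Defs.v *)
From mathcomp Require Import all_boot all_order all_algebra.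
From mathcomp Require Import reals.
Set Implicit Arguments. Unset Strict Implicit. Unset Printing Implicit Defensive.
Import Order.TTheory GRing.Theory Num.Theory.
Local Open Scope ring_scope.

(* A family of cubes y + [0,2[^d with y in Z^d is represented by the
   (boolean) predicate T on Z^d = ('I_d -> int) selecting the base points y. *)

Definition is_cube_tiling (R : realType) (d : nat) (T : pred ('I_d -> int)) : Prop :=
  (forall x : 'I_d -> R,
     exists! y : 'I_d -> int,
       T y /\ (forall i, (y i)%:~R <= x i /\ x i < (y i)%:~R + 2)) /\
  (forall (y : 'I_d -> int) (e : 'I_d -> int),
     T y -> T (fun i => y i + 4 * e i)).

Definition cube_in_box (d : nat) (y z : 'I_d -> int) : bool :=
  [forall i, (z i <= y i) && (y i + 2 <= z i + 4)].

(* N_z(T): number of cubes of T contained in z + [0,4[^d.  Any such cube has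
   base point y = z + k with k in {0,1,2}^d, so we count over those k
   (the map k |-> z + k is injective). *)
Definition Nz (d : nat) (T : pred ('I_d -> int)) (z : 'I_d -> int) : nat :=
  #|[set k : {ffun 'I_d -> 'I_3} |
      T (fun i => z i + (k i)%:Z) && cube_in_box (fun i => z i + (k i)%:Z) z]|.

Definition m2 (d : nat) (T : pred ('I_d -> int)) : rat :=
  (4%:R ^+ d)^-1 *
  \sum_(z : {ffun 'I_d -> 'I_4}) ((Nz T (fun i => (z i)%:Z)) ^ 2)%:R.

Definition regular_tiling (d : nat) : pred ('I_d -> int) :=
  fun y => [forall i, ~~ odd `|y i|%N].

(* Main.v *)
Require Import Defs.
From mathcomp Require Import all_boot all_order all_algebra.
From mathcomp Require Import reals.
From mathcomp Require Import zify.
Import Order.TTheory GRing.Theory Num.Theory.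
Local Open Scope ring_scope.

Lemma tile_uniq (R : realType) (d : nat) (T : pred ('I_d -> int))
  (a b p : 'I_d -> int) :
  is_cube_tiling R T -> T a -> T b ->
  (forall i, a i <= p i <= a i + 1) -> (forall i, b i <= p i <= b i + 1) ->
  a = b.
Proof.
move=> [Ht _] Ta Tb Ha Hb.
have [y [_ Hu]] := Ht (fun i => (p i)%:~R).
have key : forall c, T c -> (forall i, c i <= p i <= c i + 1) ->
   y = c.
  move=> c Tc Hc; apply: Hu; split => // i; have /andP[h1 h2] := Hc i.
  split; first by rewrite ler_int.
  rewrite -[X in _ < _ + X]/((2:int)%:~R) -intrD ltr_int; lia.
by rewrite -(key a Ta Ha) -(key b Tb Hb).
Qed.

Definition phi (a b : nat) : nat :=
  match a, b with
  | 0, 0 => 1 | 0, 1 => 2 | 0, _ => 4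
  | 1, 0 => 0 | 1, 1 => 2 | 1, _ => 3
  | _, 0 => 0 | _, 1 => 1 | _, _ => 3
  end.

Definition pos (s : nat) : int :=
  match s with 0 => -1 | 1 => 0 | 2 => 1 | 3 => 1 | _ => 3 end.

Lemma phi_lt (a b : nat) : (phi a b < 5)%N.
Proof. by case: a => [|[|a]]; case: b => [|[|b]]. Qed.

Lemma phi_pos (a b : nat) : (a < 3)%N -> (b < 3)%N ->
  b%:Z - a%:Z <= pos (phi a b) <= b%:Z - a%:Z + 1.
Proof. by case: a => [|[|[|a]]] //; case: b => [|[|[|b]]]. Qed.

Lemma phi_inj (a b a' b' : nat) : (a < 3)%N -> (b < 3)%N -> (a' < 3)%N -> (b' < 3)%N ->
  phi a b = phi a' b' -> b%:Z - a%:Z = b'%:Z - a'%:Z -> a = a' /\ b = b'.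
Proof.
by case: a => [|[|[|a]]] //; case: b => [|[|[|b]]] //;
   case: a' => [|[|[|a']]] //; case: b' => [|[|[|b']]].
Qed.

Section S.
Variable d : nat.
Local Notation Z4 := {ffun 'I_d -> 'I_4}.
Local Notation K3 := {ffun 'I_d -> 'I_3}.

Definition pt (z : Z4) (k : K3) : 'I_d -> int := fun i => (z i)%:Z + (k i)%:Z.

Lemma Nz_sum (T : pred ('I_d -> int)) (z : Z4) :
  Nz T (fun i => (z i)%:Z) = (\sum_(k : K3) (T (pt z k) : nat))%N.
Proof.
rewrite /Nz.
have -> : [set k : K3 | T (fun i => (z i)%:Z + (k i)%:Z) &&
      cube_in_box (fun i => (z i)%:Z + (k i)%:Z) (fun i => (z i)%:Z)]
    = [set k : K3 | T (pt z k)].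
  apply/setP => k; rewrite !inE /pt.
  have -> : cube_in_box (fun i => (z i)%:Z + (k i)%:Z) (fun i => (z i)%:Z).
    apply/forallP => i /=; have := ltn_ord (k i); move: (k i : nat) (z i : nat) => a b ha; apply/andP; split; lia.
  by rewrite andbT.
rewrite cardsE -sum1_card big_mkcond /=.
by apply: eq_bigr => k _; rewrite unfold_in /=; case: (T _).
Qed.

Lemma sumsq (T : pred ('I_d -> int)) :
  (\sum_(z : Z4) (Nz T (fun i => (z i)%:Z)) ^ 2)%N =
  #|[set x : Z4 * K3 * K3 | T (pt x.1.1 x.1.2) && T (pt x.1.1 x.2)]|.
Proof.
rewrite -sum1_card [RHS]big_mkcond /=.
under [RHS]eq_bigr => x _ do rewrite inE.
rewrite -(pair_bigA _ (fun (p : Z4 * K3) (k' : K3) =>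
   if T (pt p.1 p.2) && T (pt p.1 k') then 1%N else 0%N)) /=.
rewrite -(pair_bigA _ (fun (z : Z4) (k : K3) => \sum_(k' : K3)
   if T (pt z k) && T (pt z k') then 1%N else 0%N)) /=.
apply: eq_bigr => z _; rewrite Nz_sum -mulnn big_distrl /=.
apply: eq_bigr => k _; rewrite big_distrr /=.
apply: eq_bigr => k' _ /=.
by case: (T _); case: (T _).
Qed.

Definition fmap (x : Z4 * K3 * K3) : {ffun 'I_d -> 'I_2} * {ffun 'I_d -> 'I_5} :=
  let: (z, k, k') := x in
  ([ffun i => inord (((z i : nat) + (k i : nat)) %% 4 %/ 2)%N],
   [ffun i => inord (phi (k i) (k' i))]).

Lemma close1 (a b : int) : a - 1 <= b <= a + 1 ->
  a <= (if a <= b then b else a) <= a + 1.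
Proof. by move=> h; case: ifP => h2; lia. Qed.
Lemma close2 (a b : int) : a - 1 <= b <= a + 1 ->
  b <= (if a <= b then b else a) <= b + 1.
Proof. by move=> h; case: ifP => h2; lia. Qed.

Lemma count_le (R : realType) (T : pred ('I_d -> int)) : is_cube_tiling R T ->
  (#|[set x : Z4 * K3 * K3 | T (pt x.1.1 x.1.2) && T (pt x.1.1 x.2)]|
     <= 2 ^ d * 5 ^ d)%N.
Proof.
move=> Ht.
have per : forall y e, T y -> T (fun i => y i + 4 * e i) by case: Ht.
rewrite -(card_in_imset (f := fmap)).
  by apply: leq_trans (max_card _) _; rewrite card_prod !card_ffun !card_ord.
move=> [[z1 k1] k1'] [[z2 k2] k2']; rewrite !inE /= => /andP[T1 U1] /andP[T2 U2] [H1 H2].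
have Hm : forall i, ((z1 i + k1 i) %% 4 %/ 2 = (z2 i + k2 i) %% 4 %/ 2)%N.
  move=> i; have := congr1 (fun g : {ffun 'I_d -> 'I_2} => nat_of_ord (g i)) H1.
  by rewrite /= !ffunE !inordK //; lia.
have Hp : forall i, phi (k1 i) (k1' i) = phi (k2 i) (k2' i).
  move=> i; have := congr1 (fun g : {ffun 'I_d -> 'I_5} => nat_of_ord (g i)) H2.
  by rewrite /= !ffunE !inordK // ltnS -ltnS phi_lt.
pose E i : int := ((z2 i + k2 i) %/ 4)%N%:Z - ((z1 i + k1 i) %/ 4)%N%:Z.
have eqt : pt z1 k1 = (fun i => pt z2 k2 i + 4 * - E i).
  have T2' := per _ (fun i => - E i) T2.
  apply: (@tile_uniq R d T _ _ (fun i => if pt z1 k1 i <= pt z2 k2 i + 4 * - E i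
     then pt z2 k2 i + 4 * - E i else pt z1 k1 i) Ht) => //.
  - move=> i /=; apply: close1.
    have := Hm i; rewrite /pt /E; move: (z1 i : nat) (k1 i : nat) (z2 i : nat) (k2 i : nat).
    move=> a b c e h; lia.
  - move=> i /=; apply: close2.
    have := Hm i; rewrite /pt /E; move: (z1 i : nat) (k1 i : nat) (z2 i : nat) (k2 i : nat).
    move=> a b c e h; lia.
have eqti : forall i, pt z1 k1 i = pt z2 k2 i + 4 * - E i
  by move=> i; rewrite eqt.
have equ : pt z1 k1' = (fun i => pt z2 k2' i + 4 * - E i).
  have U2' := per _ (fun i => - E i) U2.
  apply: (@tile_uniq R d T _ _ (fun i => pt z1 k1 i + pos (phi (k1 i) (k1' i))) Ht) => // i.
    have := @phi_pos _ _ (ltn_ord (k1 i)) (ltn_ord (k1' i)).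
    rewrite /pt; move: (z1 i : nat) (k1 i : nat) (k1' i : nat) (pos _) => a b c q; lia.
  have := @phi_pos _ _ (ltn_ord (k2 i)) (ltn_ord (k2' i)).
  have := eqti i; rewrite Hp /pt; move: (E i) (pos _) => w q.
  move: (z1 i : nat) (k1 i : nat) (z2 i : nat) (k2 i : nat) (k2' i : nat) => a b c e f; lia.
have Hk : forall i, k1 i = k2 i /\ k1' i = k2' i.
  move=> i; have := congr1 (fun g => g i) equ; have := eqti i; rewrite /pt /= => h1 h2.
  have [] := @phi_inj _ _ _ _ (ltn_ord (k1 i)) (ltn_ord (k1' i)) (ltn_ord (k2 i)) (ltn_ord (k2' i)) (Hp i).
    move: (E i) h1 h2 => w.
    move: (z1 i : nat) (k1 i : nat) (k1' i : nat) (z2 i : nat) (k2 i : nat) (k2' i : nat) => a b c e f g; lia.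
  by move=> a b; split; apply: val_inj.
have Hz : forall i, z1 i = z2 i.
  move=> i; apply: val_inj => /=; have [a _] := Hk i; have := eqti i.
  rewrite /pt /E a; have := ltn_ord (z1 i); have := ltn_ord (z2 i).
  move: (z1 i : nat) (z2 i : nat) (k2 i : nat) => x y w; lia.
congr (_, _, _); apply/ffunP => i; [exact: Hz | exact: (Hk i).1 | exact: (Hk i).2].
Qed.
End S.

Lemma ten : (\sum_(c : 'I_4) (\sum_(b : 'I_3) (~~ odd (c + b)%N : nat)) ^ 2 = 10)%N.
Proof. by rewrite !big_ord_recl !big_ord0. Qed.

Lemma reg_count (d : nat) :
  (\sum_(z : {ffun 'I_d -> 'I_4}) (Nz (@regular_tiling d) (fun i => (z i)%:Z)) ^ 2)%N
   = (10 ^ d)%N.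
Proof.
have H : forall z : {ffun 'I_d -> 'I_4}, Nz (@regular_tiling d) (fun i => (z i)%:Z) =
   (\prod_i \sum_(b : 'I_3) (~~ odd (z i + b)%N : nat))%N.
  move=> z; rewrite Nz_sum bigA_distr_bigA /=; apply: eq_bigr => k _.
  rewrite /regular_tiling /pt.
  case: (boolP [forall i, _]) => [/forallP Hf | /forallPn [i Hi]].
    rewrite big1 // => i _; have := Hf i; rewrite -PoszD absz_nat; by case: odd.
  rewrite (bigD1 i) //=; move: Hi; rewrite -PoszD absz_nat negbK => ->.
  by rewrite mul0n.
under eq_bigr => z _ do rewrite H -mulnn -big_split /=.
rewrite -(bigA_distr_bigA (fun (i : 'I_d) (c : 'I_4) =>
   (\sum_(b : 'I_3) (~~ odd (c + b)%N : nat)) * (\sum_(b : 'I_3) (~~ odd (c + b)%N : nat)))%N) /=.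
by rewrite (eq_bigr (fun _ => 10%N)) ?prod_nat_const ?card_ord // => i _; rewrite -ten; apply: eq_bigr => c _; rewrite mulnn.
Qed.

Theorem theorem4 (R : realType) (d : nat) (T : pred ('I_d -> int)) :
  (1 <= d)%N -> is_cube_tiling R T -> m2 T <= m2 (@regular_tiling d).
Proof.
move=> _ Ht; rewrite /m2; apply: ler_wpM2l.
  by rewrite invr_ge0 exprn_ge0.
rewrite -!natr_sum ler_nat reg_count sumsq.
have -> : (10 ^ d = 2 ^ d * 5 ^ d)%N by rewrite -expnMn.
exact: count_le Ht.
Qed.
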